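(* In the setting below, the image of the ring homomorphism $\Phi:\mathbb{Q}[X_{F,e},Y_k:F\in\mathcal{F}_K,k\in K]\to H^*(X_P;\mathbb{Q})$ lies in $H^*(X_P;\mathbb{Q})^{W_K}$.
   Context: Setting: $R$ is a reduced crystallographic root system spanning an $n$-dimensional Euclidean space $V$, with simple system $S=\{\alpha_1,\dots,\alpha_n\}$ identified with $\{1,\dots,n\}$ and Weyl group $W$; $M$ is a lattice with $\mathbb{Z}R\subseteq M\subseteq\{x:2\langle x,\alpha\rangle/\langle\alpha,\alpha\rangle\in\mathbb{Z}\ \forall\alpha\in R\}$; $\Lambda\subset C_S\cap\mathbb{Q}M$ finite with $P=\operatorname{conv}(W(\Lambda))$ full-dimensional, simple (each vertex in exactly $n$ facets) and non-degenerate (no vertex on the boundary of $C_S$); $K\subseteq S$, $W_K$ generated by the reflections $r_k$ in $\alpha_k$, $k\in K$, $H_k$ the fixed hyperplane of $r_k$, $C_K=\{x:\langle x,\alpha_k\rangle\ge0\ \forall k\in K\}$. $\mathcal{F}_K$ is the set of facets of $P$ with barycenter in $C_K$, $W_F$ the stabilizer of $F$ in $W_K$, $\mathcal{F}=\{(F,s):F\in\mathcal{F}_K,s\in W_K/W_F\}$. For a facet $G$ of $P$, $\ell_G$ is its outward normal primitive in $M^\vee=\{y:\langle y,u\rangle\in\mathbb{Z}\ \forall u\in M\}$, and $\ell_{H_k}$ is the primitive outward normal of the facet $H_k\cap P$ of $P\cap C_K$ (a negative multiple of $\alpha_k$). $X_P$ is the toric variety of $P$ with respect to $M$, with $H^*(X_P;\mathbb{Q})=\mathbb{Q}[X_{F,s}:(F,s)\in\mathcal{F}]/(I_P+J_P)$,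 $\deg X_{F,s}=2$, $I_P$ generated by $X_{F_1,s_1}\cdots X_{F_p,s_p}$ with $s_1(F_1)\cap\cdots\cap s_p(F_p)=\emptyset$, $J_P$ generated by $\sum_{(F,s)\in\mathcal{F}}\langle u,\ell_{s(F)}\rangle X_{F,s}$, $u\in M$; $W_K$ acts by $t\cdot X_{F,s}=X_{F,ts}$. For $F\in\mathcal{F}_K$ and $s\in W_K$ write $s(\ell_F)-\ell_F=\sum_{k\in K}C_{F,s,k}\ell_{H_k}$ with $C_{F,s,k}\in\mathbb{Q}$ (nonnegative, uniquely determined and depending only on $sW_F$). $\Phi$ is the ring homomorphism with $\Phi(X_{F,e})=\sum_{s\in W_K/W_F}X_{F,s}$ and $\Phi(Y_k)=\sum_{(F,s)\in\mathcal{F}}C_{F,s,k}X_{F,s}$. *)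

(* Defs.v *)
(* V = 'cV[R]_n over R : realType (mathcomp-analysis `reals`),
   cohomology presented as a quotient of multinomials' {mpoly rat[N]}. *)
From HB Require Import structures.
From mathcomp Require Import all_boot all_order all_algebra.
From mathcomp Require Import reals.
From mathcomp Require Import mpoly.
Set Implicit Arguments. Unset Strict Implicit. Unset Printing Implicit Defensive.
Import Order.TTheory GRing.Theory Num.Theory.
Local Open Scope ring_scope.

Section Geometry.
Variable R : realType.
Variable n : nat.
Local Notation V := 'cV[R]_n.

Definition dot (u v : V) : R := (u^T *m v) 0 0.
Definition isZ (x : R) : Prop := exists z : int, x = z%:~R.
Definition cop (x a : V) : R := 2 * dot x a / dot a a.
Definition refl (a : V) : 'M[R]_n := 1%:M - (2 / dot a a) *: (a *m a^T).

Definition reduced_cryst_root_system (Rt : seq V) : Prop :=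
  [/\ 0 \notin Rt,
      (forall x : V, exists c : 'I_(size Rt) -> R, x = \sum_i c i *: Rt`_i),
      (forall a b, a \in Rt -> b \in Rt -> refl a *m b \in Rt),
      (forall a b, a \in Rt -> b \in Rt -> isZ (cop b a)) &
      (forall a (c : R), a \in Rt -> c *: a \in Rt -> c = 1 \/ c = -1)].

Definition simple_system (Rt : seq V) (alpha : 'I_n -> V) : Prop :=
  [/\ (forall i, alpha i \in Rt),
      (forall c : 'I_n -> R, \sum_i c i *: alpha i = 0 -> forall i, c i = 0) &
      (forall b, b \in Rt -> exists z : 'I_n -> int,
          b = \sum_i (z i)%:~R *: alpha i /\
          ((forall i, 0 <= z i) \/ (forall i, z i <= 0)))].

Definition prod_refl (s : seq V) : 'M[R]_n := foldr (fun a w => refl a *m w) 1%:M s.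
Definition inW (Rt : seq V) (w : 'M[R]_n) : Prop :=
  exists s : seq V, {subset s <= Rt} /\ w = prod_refl s.
Definition inWK (alpha : 'I_n -> V) (K : {set 'I_n}) (w : 'M[R]_n) : Prop :=
  exists s : seq 'I_n, {subset s <= K} /\ w = prod_refl (map alpha s).

(* the lattice M, given by a Z-basis (columns of B) *)
Definition inM (B : 'M[R]_n) (x : V) : Prop :=
  exists z : 'I_n -> int, x = \sum_i (z i)%:~R *: col i B.
Definition inQM (B : 'M[R]_n) (x : V) : Prop :=
  exists q : 'I_n -> rat, x = \sum_i ratr (q i) *: col i B.
Definition inMdual (B : 'M[R]_n) (y : V) : Prop :=
  forall u, inM B u -> isZ (dot y u).
Definition primitive (B : 'M[R]_n) (y : V) : Prop :=
  [/\ inMdual B y, y != 0 &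
      forall m : nat, (1 < m)%N -> ~ inMdual B (m%:R^-1 *: y)].
Definition lattice_ok (Rt : seq V) (B : 'M[R]_n) : Prop :=
  [/\ B \in unitmx,
      (forall a, a \in Rt -> inM B a) &
      (forall x a, inM B x -> a \in Rt -> isZ (cop x a))].

Definition inCS (alpha : 'I_n -> V) (x : V) : Prop := forall i, 0 <= dot x (alpha i).
Definition inCK (alpha : 'I_n -> V) (K : {set 'I_n}) (x : V) : Prop :=
  forall k, k \in K -> 0 <= dot x (alpha k).

Definition WLam (Rt Lam : seq V) (x : V) : Prop :=
  exists w l, [/\ inW Rt w, l \in Lam & x = w *m l].
Definition inP (Rt Lam : seq V) (x : V) : Prop :=
  exists (m : nat) (p : 'I_m -> V) (c : 'I_m -> R),
    [/\ (forall i, WLam Rt Lam (p i)), (forall i, 0 <= c i),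
        \sum_i c i = 1 & x = \sum_i c i *: p i].

Definition face (P : V -> Prop) (l : V) (x : V) : Prop :=
  P x /\ forall y, P y -> dot l y <= dot l x.
Definition aff_indep (m : nat) (p : 'I_m -> V) : Prop :=
  forall c : 'I_m -> R, \sum_i c i = 0 -> \sum_i c i *: p i = 0 -> forall i, c i = 0.
(* l is the primitive (in M^vee) outward normal of a facet (face of dim n-1) of P;
   facets of the full-dimensional P are identified with these normals *)
Definition isFacetNormal (B : 'M[R]_n) (P : V -> Prop) (l : V) : Prop :=
  primitive B l /\
  exists p : 'I_n -> V, (forall i, face P l (p i)) /\ aff_indep p.
Definition isNormalOf (B : 'M[R]_n) (P : V -> Prop) (l : V) (G : V -> Prop) : Prop :=
  isFacetNormal B P l /\ forall x, face P l x <-> G x.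
Definition vertex (P : V -> Prop) (x : V) : Prop :=
  P x /\ exists l, forall y, face P l y <-> y = x.
Definition full_dim (P : V -> Prop) : Prop :=
  exists p : 'I_n.+1 -> V, (forall i, P (p i)) /\ aff_indep p.
Definition simple_poly (B : 'M[R]_n) (P : V -> Prop) : Prop :=
  forall x, vertex P x -> exists g : 'I_n -> V,
    [/\ injective g,
        (forall i, isFacetNormal B P (g i) /\ face P (g i) x) &
        (forall l, isFacetNormal B P l -> face P l x -> exists i, l = g i)].
Definition nondeg (alpha : 'I_n -> V) (P : V -> Prop) : Prop :=
  forall x, vertex P x -> inCS alpha x -> forall i, dot x (alpha i) != 0.

Definition setting (Rt : seq V) (alpha : 'I_n -> V) (B : 'M[R]_n) (Lam : seq V) : Prop :=
  [/\ reduced_cryst_root_system Rt, simple_system Rt alpha, lattice_ok Rt B,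
      (forall l, l \in Lam -> inCS alpha l /\ inQM B l) &
      [/\ full_dim (inP Rt Lam), simple_poly B (inP Rt Lam) & nondeg alpha (inP Rt Lam)]].

Definition bary_in (P : V -> Prop) (l : V) (C : V -> Prop) : Prop :=
  exists vs : seq V,
    [/\ uniq vs, (forall x, x \in vs <-> vertex P x /\ face P l x) &
        C ((size vs)%:R^-1 *: \sum_(v <- vs) v)].

Definition img (w : 'M[R]_n) (G : V -> Prop) (x : V) : Prop :=
  exists y, G y /\ x = w *m y.
Definition stabF alpha K (P : V -> Prop) (l : V) (w : 'M[R]_n) : Prop :=
  inWK alpha K w /\ forall x, img w (face P l) x <-> face P l x.
Definition same_coset alpha K P l (s s' : 'M[R]_n) : Prop :=
  stabF alpha K P l (invmx s *m s').

(* l_{H_k}: primitive outward normal of H_k cap P in P cap C_K *)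
Definition isLH (B : 'M[R]_n) (alpha : 'I_n -> V) (k : 'I_n) (y : V) : Prop :=
  primitive B y /\ exists c : R, c < 0 /\ y = c *: alpha k.

End Geometry.

Section Ring.
Variable R : realType.
Variable n : nat.
Local Notation V := 'cV[R]_n.
Variables (Rt : seq V) (alpha : 'I_n -> V) (B : 'M[R]_n) (Lam : seq V) (K : {set 'I_n}).
Local Notation P := (inP Rt Lam).

(* FK enumerates (the primitive normals of) the facets in F_K *)
Definition FK_enum (NK : nat) (FK : 'I_NK -> V) : Prop :=
  [/\ injective FK,
      (forall j, isFacetNormal B P (FK j) /\ bary_in P (FK j) (inCK alpha K)) &
      (forall l, isFacetNormal B P l -> bary_in P l (inCK alpha K) -> exists j, l = FK j)].

(* ix enumerates the pairs (F, s) in calF: ix i = (index of F in FK, a representative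
   s in W_K of the coset s W_F), each pair occurring exactly once. *)
Definition pair_enum (NK : nat) (FK : 'I_NK -> V) (N : nat)
    (ix : 'I_N -> 'I_NK * 'M[R]_n) : Prop :=
  [/\ (forall i, inWK alpha K (ix i).2),
      (forall j s, inWK alpha K s -> exists i,
          (ix i).1 = j /\ same_coset alpha K P (FK j) (ix i).2 s) &
      (forall i i', (ix i).1 = (ix i').1 ->
          same_coset alpha K P (FK (ix i).1) (ix i).2 (ix i').2 -> i = i')].

Variables (NK : nat) (FK : 'I_NK -> V) (N : nat) (ix : 'I_N -> 'I_NK * 'M[R]_n).

Definition sF (i : 'I_N) : V -> Prop := img (ix i).2 (face P (FK (ix i).1)).

Definition isIgen (g : {mpoly rat[N]}) : Prop :=
  exists S : {set 'I_N},
    ~ (exists x, forall i, i \in S -> sF i x) /\ g = \prod_(i in S) 'X_i.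
Definition isJgen (g : {mpoly rat[N]}) : Prop :=
  exists u, inM B u /\ exists cf : 'I_N -> rat,
    (forall i l, isNormalOf B P l (sF i) -> ratr (cf i) = dot u l) /\
    g = \sum_i cf i *: 'X_i.
Definition inIJ (q : {mpoly rat[N]}) : Prop :=
  exists (m : nat) (a g : 'I_m -> {mpoly rat[N]}),
    (forall r, isIgen (g r) \/ isJgen (g r)) /\ q = \sum_r a r * g r.

(* C i m is C_{F,s,k} for ix i = (F,s) and k = enum_val m *)
Definition C_ok (lH : 'I_n -> V) (C : 'I_N -> 'I_#|K| -> rat) : Prop :=
  forall i, (ix i).2 *m FK (ix i).1 - FK (ix i).1
            = \sum_(m : 'I_#|K|) ratr (C i m) *: lH (enum_val m).

(* Phi on generators: variable lshift j is X_{F_j,e}, variable rshift m is Y_{enum_val m} *)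
Definition Phi_gen (C : 'I_N -> 'I_#|K| -> rat) (v : 'I_(NK + #|K|)) : {mpoly rat[N]} :=
  match split v with
  | inl j => \sum_(i | (ix i).1 == j) 'X_i
  | inr m => \sum_i C i m *: 'X_i
  end.
Definition Phi (C : 'I_N -> 'I_#|K| -> rat) (p : {mpoly rat[NK + #|K|]}) : {mpoly rat[N]} :=
  comp_mpoly [tuple Phi_gen C v | v < NK + #|K|] p.

(* action of t in W_K on Q[X_{F,s}]: X_i |-> X_(sigma i), where sigma encodes s |-> t s *)
Definition act (sigma : 'I_N -> 'I_N) (q : {mpoly rat[N]}) : {mpoly rat[N]} :=
  comp_mpoly [tuple 'X_(sigma i) | i < N] q.
Definition represents_t (t : 'M[R]_n) (sigma : 'I_N -> 'I_N) : Prop :=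
  forall i, (ix (sigma i)).1 = (ix i).1 /\
    same_coset alpha K P (FK (ix i).1) (t *m (ix i).2) (ix (sigma i)).2.

End Ring.

(* Main.v *)
Require Import Defs.
From HB Require Import structures.
From mathcomp Require Import all_boot all_order all_algebra.
From mathcomp Require Import reals.
From mathcomp Require Import mpoly.
Import Order.TTheory GRing.Theory Num.Theory.
Local Open Scope ring_scope.
Set Implicit Arguments. Unset Strict Implicit. Unset Printing Implicit Defensive.
Section Geo.
Variable R : realType.
Variable n : nat.
Local Notation V := 'cV[R]_n.

Lemma dotE (u v : V) : dot u v = \sum_j u j 0 * v j 0.
Proof. by rewrite /dot mxE; apply: eq_bigr => j _; rewrite mxE. Qed.

Lemma dotC (u v : V) : dot u v = dot v u.
Proof. by rewrite !dotE; apply: eq_bigr => j _; rewrite mulrC. Qed.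

Lemma dotDl (u v w : V) : dot (u + v) w = dot u w + dot v w.
Proof. by rewrite !dotE -big_split; apply: eq_bigr => j _; rewrite mxE mulrDl. Qed.

Lemma dotZl (c : R) (u w : V) : dot (c *: u) w = c * dot u w.
Proof. by rewrite !dotE mulr_sumr; apply: eq_bigr => j _; rewrite mxE mulrA. Qed.

Lemma dotNl (u w : V) : dot (- u) w = - dot u w.
Proof. by rewrite -scaleN1r dotZl mulN1r. Qed.

Lemma dotBl (u v w : V) : dot (u - v) w = dot u w - dot v w.
Proof. by rewrite dotDl dotNl. Qed.

Lemma dotDr (u v w : V) : dot w (u + v) = dot w u + dot w v.
Proof. by rewrite !(dotC w) dotDl. Qed.

Lemma dotZr (c : R) (u w : V) : dot w (c *: u) = c * dot w u.
Proof. by rewrite !(dotC w) dotZl. Qed.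

Lemma dotBr (u v w : V) : dot w (u - v) = dot w u - dot w v.
Proof. by rewrite !(dotC w) dotBl. Qed.

Lemma dot0l (w : V) : dot 0 w = 0.
Proof. by rewrite dotE big1 // => j _; rewrite mxE mul0r. Qed.

Lemma dot0r (w : V) : dot w 0 = 0.
Proof. by rewrite dotC dot0l. Qed.

Lemma dot_suml (I : Type) (r : seq I) (P : pred I) (F : I -> V) w :
  dot (\sum_(i <- r | P i) F i) w = \sum_(i <- r | P i) dot (F i) w.
Proof.
exact: (big_morph (fun x => dot x w) (fun x y => dotDl x y w) (dot0l w)).
Qed.

Lemma dot_sumr (I : Type) (r : seq I) (P : pred I) (F : I -> V) w :
  dot w (\sum_(i <- r | P i) F i) = \sum_(i <- r | P i) dot w (F i).
Proof. by rewrite dotC dot_suml; apply: eq_bigr => i _; rewrite dotC. Qed.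

Lemma dot_mull (A : 'M[R]_n) (u v : V) : dot (A *m u) v = dot u (A^T *m v).
Proof. by rewrite /dot trmx_mul mulmxA. Qed.

Lemma dot_mulr (A : 'M[R]_n) (u v : V) : dot u (A *m v) = dot (A^T *m u) v.
Proof. by rewrite dot_mull trmxK. Qed.

Lemma dot_ge0 (u : V) : 0 <= dot u u.
Proof. by rewrite dotE sumr_ge0 // => j _; rewrite -expr2 sqr_ge0. Qed.

Lemma dot_eq0 (u : V) : (dot u u == 0) = (u == 0).
Proof.
apply/idP/idP; last by move/eqP->; rewrite dot0l.
rewrite dotE psumr_eq0; last by move=> j _; rewrite -expr2 sqr_ge0.
move/allP => H; apply/eqP/matrixP => i j; rewrite (ord1 j) mxE.
by have /(_ (mem_index_enum i)) := H i; rewrite mulf_eq0 orbb => /eqP.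
Qed.

Lemma trmx_dot (a u : V) : a^T *m u = (dot a u)%:M.
Proof. by apply/matrixP => i j; rewrite (ord1 i) (ord1 j) [RHS]mxE eqxx mulr1n. Qed.

End Geo.
Section Refl.
Variable R : realType.
Variable n : nat.
Local Notation V := 'cV[R]_n.

Lemma refl_tr (a : V) : (refl a)^T = refl a.
Proof. by rewrite /refl linearB /= trmx1 linearZ /= trmx_mul trmxK. Qed.

Lemma refl_mul (a x : V) : refl a *m x = x - cop x a *: a.
Proof.
rewrite /refl mulmxBl mul1mx -scalemxAl -mulmxA trmx_dot mul_mx_scalar scalerA.
by rewrite /cop dotC mulrAC.
Qed.

Lemma cop_self (a : V) : a != 0 -> cop a a = 2.
Proof. by move=> a0; rewrite /cop mulfK // dot_eq0. Qed.

Lemma refl_invol (a : V) : a != 0 -> refl a *m refl a = 1%:M.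
Proof.
move=> a0; rewrite {2}/refl mulmxBr mulmx1 -scalemxAr mulmxA refl_mul cop_self //.
have -> : a - 2 *: a = - a by rewrite scalerDl scale1r opprD addNKr.
by rewrite mulNmx scalerN opprK /refl subrK.
Qed.

Lemma cop_lin (x y a : V) : cop (x + y) a = cop x a + cop y a.
Proof. by rewrite /cop dotDl mulrDr mulrDl. Qed.

End Refl.
Section Weyl.
Variable R : realType.
Variable n : nat.
Local Notation V := 'cV[R]_n.
Variable Rt : seq V.
Hypothesis Rt0 : 0 \notin Rt.

Lemma prod_refl_cat (s1 s2 : seq V) :
  prod_refl (s1 ++ s2) = prod_refl s1 *m prod_refl s2.
Proof. by elim: s1 => [|a s IH] /=; rewrite ?mul1mx // IH mulmxA. Qed.

Lemma prod_refl_tr (s : seq V) : (prod_refl s)^T = prod_refl (rev s).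
Proof.
elim: s => [|a s IH]; first by rewrite /= trmx1.
rewrite [prod_refl (a :: s)]/= trmx_mul IH rev_cons -cats1.
rewrite (prod_refl_cat (rev s) [:: a]).
by rewrite /= mulmx1 refl_tr.
Qed.

Lemma prod_refl_orth (s : seq V) : {subset s <= Rt} ->
  (prod_refl s)^T *m prod_refl s = 1%:M.
Proof.
elim: s => [|a s IH] /= sub; first by rewrite trmx1 mulmx1.
have a0 : a != 0 by apply: contraNneq Rt0 => <-; apply: sub; rewrite inE eqxx.
rewrite trmx_mul refl_tr -mulmxA (mulmxA (refl a)) refl_invol // mul1mx IH //.
by move=> x xs; apply: sub; rewrite inE xs orbT.
Qed.

Lemma W_orth (w : 'M[R]_n) : inW Rt w -> w^T *m w = 1%:M /\ w *m w^T = 1%:M.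
Proof.
case=> s [sub ->]; have h := prod_refl_orth sub; split=> //.
exact: mulmx1C.
Qed.

Lemma W_tr (w : 'M[R]_n) : inW Rt w -> inW Rt w^T.
Proof.
case=> s [sub ->]; exists (rev s); split; last exact: prod_refl_tr.
by move=> x; rewrite mem_rev; apply: sub.
Qed.

Lemma W_mul (w1 w2 : 'M[R]_n) : inW Rt w1 -> inW Rt w2 -> inW Rt (w1 *m w2).
Proof.
case=> s1 [sub1 ->] [s2 [sub2 ->]]; exists (s1 ++ s2); split; last exact: (esym (prod_refl_cat s1 s2)).
by move=> x; rewrite mem_cat => /orP[]; [apply: sub1 | apply: sub2].
Qed.

Lemma W_one : inW Rt 1%:M.
Proof. by exists [::]. Qed.

Lemma W_dot (w : 'M[R]_n) (x y : V) : inW Rt w -> dot (w *m x) (w *m y) = dot x y.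
Proof. by move=> /W_orth[h _]; rewrite dot_mull mulmxA h mul1mx. Qed.

Lemma W_inv (w : 'M[R]_n) : inW Rt w -> invmx w = w^T.
Proof.
move=> /W_orth[h1 h2]; have [wu _] := mulmx1_unit h2.
by rewrite -[invmx w]mulmx1 -h2 mulmxA mulVmx // mul1mx.
Qed.

Lemma W_TK (w : 'M[R]_n) (x : V) : inW Rt w -> w^T *m (w *m x) = x.
Proof. by move=> /W_orth[h _]; rewrite mulmxA h mul1mx. Qed.

Lemma W_KT (w : 'M[R]_n) (x : V) : inW Rt w -> w *m (w^T *m x) = x.
Proof. by move=> /W_orth[_ h]; rewrite mulmxA h mul1mx. Qed.

Lemma W_inj (w : 'M[R]_n) (x y : V) : inW Rt w -> w *m x = w *m y -> x = y.
Proof. by move=> hw e; rewrite -(W_TK x hw) e W_TK. Qed.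

End Weyl.
Section Lattice.
Variable R : realType.
Variable n : nat.
Local Notation V := 'cV[R]_n.
Variable B : 'M[R]_n.

Lemma isZ_int (z : int) : isZ (z%:~R : R).
Proof. by exists z. Qed.

Lemma isZD (x y : R) : isZ x -> isZ y -> isZ (x + y).
Proof. by case=> a -> [b ->]; exists (a + b); rewrite rmorphD. Qed.

Lemma isZN (x : R) : isZ x -> isZ (- x).
Proof. by case=> a ->; exists (- a); rewrite rmorphN. Qed.

Lemma isZM (x y : R) : isZ x -> isZ y -> isZ (x * y).
Proof. by case=> a -> [b ->]; exists (a * b); rewrite rmorphM. Qed.

Lemma isZ0 : isZ (0 : R).
Proof. by exists 0. Qed.

Lemma isZ_sum (I : Type) (r : seq I) (P : pred I) (F : I -> R) :
  (forall i, P i -> isZ (F i)) -> isZ (\sum_(i <- r | P i) F i).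
Proof.
move=> h; elim/big_rec: _ => [|i x Pi hx]; first exact: isZ0.
by apply: isZD => //; apply: h.
Qed.

Lemma inM_col r : inM B (col r B).
Proof.
exists (fun i => (i == r)%:R); rewrite (bigD1 r) //= big1 ?addr0.
  by rewrite eqxx scale1r.
by move=> i /negbTE ->; rewrite scale0r.
Qed.

Lemma inM0 : inM B 0.
Proof. by exists (fun _ => 0); rewrite big1 // => i _; rewrite scale0r. Qed.

Lemma inM_lin (x a : V) (c : R) : inM B x -> inM B a -> isZ c -> inM B (x - c *: a).
Proof.
case=> z -> [z' ->] [k ->]; exists (fun i => z i - k * z' i).
rewrite scaler_sumr -sumrB; apply: eq_bigr => i _.
by rewrite scalerA rmorphB rmorphM scalerBl.
Qed.

Lemma inMdualP (y : V) : inMdual B y <-> forall r, isZ (dot y (col r B)).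
Proof.
split; first by move=> h r; apply: h; apply: inM_col.
move=> h u [z ->]; rewrite dot_sumr; apply: isZ_sum => i _.
by rewrite dotZr; apply: isZM; [apply: isZ_int | apply: h].
Qed.

Variable Rt : seq V.
Hypothesis Rt0 : 0 \notin Rt.
Hypothesis latok : lattice_ok Rt B.

Lemma W_M (w : 'M[R]_n) (x : V) : inW Rt w -> inM B x -> inM B (w *m x).
Proof.
case: latok => _ RM copZ.
case=> s [sub ->]; elim: s sub x => [|a s IH] sub x xM /=; first by rewrite mul1mx.
have aR : a \in Rt by apply: sub; rewrite inE eqxx.
rewrite -mulmxA refl_mul; apply: inM_lin; [apply: IH | exact: RM | apply: copZ] => //.
  by move=> y ys; apply: sub; rewrite inE ys orbT.
apply: IH => //; by move=> y ys; apply: sub; rewrite inE ys orbT.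
Qed.

Lemma W_Mdual (w : 'M[R]_n) (y : V) : inW Rt w -> inMdual B y -> inMdual B (w *m y).
Proof.
move=> hw hy u uM; rewrite dot_mull; apply: hy; apply: W_M => //.
exact: W_tr.
Qed.

Lemma W_prim (w : 'M[R]_n) (y : V) : inW Rt w -> primitive B y -> primitive B (w *m y).
Proof.
move=> hw [hy y0 hm]; split; first exact: W_Mdual.
  by apply: contraNneq y0 => e; rewrite -(W_TK Rt0 y hw) e mulmx0.
move=> m m1 hd; apply: (hm m m1).
have := W_Mdual (W_tr hw) hd; rewrite -scalemxAr (W_TK Rt0) //.
Qed.

End Lattice.
Section PolyW.
Variable R : realType.
Variable n : nat.
Local Notation V := 'cV[R]_n.
Variables (Rt Lam : seq V) (B : 'M[R]_n).
Hypothesis Rt0 : 0 \notin Rt.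
Hypothesis latok : lattice_ok Rt B.
Local Notation P := (inP Rt Lam).

Lemma W_WLam (w : 'M[R]_n) (x : V) : inW Rt w -> WLam Rt Lam x -> WLam Rt Lam (w *m x).
Proof.
move=> hw [w' [l [hw' hl ->]]]; exists (w *m w'), l; split=> //.
  exact: W_mul.
by rewrite mulmxA.
Qed.

Lemma W_P (w : 'M[R]_n) (x : V) : inW Rt w -> P x -> P (w *m x).
Proof.
move=> hw [m [p [c [hp hc hc1 ->]]]]; exists m, (fun i => w *m p i), c; split=> //.
  by move=> i; apply: W_WLam.
rewrite (mulmx_sumr w).
by apply: eq_bigr => i _; rewrite scalemxAr.
Qed.

Lemma W_P_iff (w : 'M[R]_n) (x : V) : inW Rt w -> P (w *m x) <-> P x.
Proof.
move=> hw; split; last exact: W_P.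
by move=> h; rewrite -(W_TK Rt0 x hw); apply: W_P => //; apply: W_tr.
Qed.

Lemma face_W (w : 'M[R]_n) (l x : V) : inW Rt w ->
  face P (w *m l) x <-> face P l (w^T *m x).
Proof.
move=> hw; have hwT := W_tr hw.
split=> [[Px h] | [Px h]]; split.
- exact: W_P.
- move=> y Py; have := h (w *m y) (W_P hw Py).
  by rewrite !dot_mull (W_TK Rt0 _ hw).
- by rewrite -(W_KT Rt0 x hw); apply: W_P.
- move=> y Py; have := h (w^T *m y) (W_P hwT Py).
  by rewrite !dot_mull.
Qed.

Lemma aff_indep_W (w : 'M[R]_n) m (p : 'I_m -> V) : inW Rt w -> aff_indep p ->
  aff_indep (fun i => w *m p i).
Proof.
move=> hw hp c c0 e; apply: hp => //.
apply: (W_inj Rt0 hw); rewrite mulmx0 (mulmx_sumr w) -[RHS]e.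
by apply: eq_bigr => i _; rewrite scalemxAr.
Qed.

Lemma facet_W (w : 'M[R]_n) (l : V) : inW Rt w -> isFacetNormal B P l ->
  isFacetNormal B P (w *m l).
Proof.
move=> hw [pl [p [hp ai]]]; split; first exact: (W_prim Rt0 latok).
exists (fun i => w *m p i); split; last exact: aff_indep_W.
by move=> i; apply/(face_W _ _ hw); rewrite (W_TK Rt0 _ hw).
Qed.

End PolyW.
Section Unique1.
Variable R : realType.

Lemma colmx_mul (n m : nat) (e : 'I_m -> 'cV[R]_n) (x : 'cV[R]_m) :
  (\matrix_(j, i) (e i) j 0) *m x = \sum_i x i 0 *: e i.
Proof.
apply/matrixP => j k; rewrite (ord1 k) !mxE summxE; apply: eq_bigr => i _.
by rewrite !mxE mulrC.
Qed.

Lemma colmx_trmul (n : nat) (e : 'I_n -> 'cV[R]_n) (y : 'cV[R]_n) i :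
  ((\matrix_(j, i) (e i) j 0)^T *m y) i 0 = dot (e i) y.
Proof. by rewrite mxE dotE; apply: eq_bigr => j _; rewrite !mxE. Qed.

Lemma inj_unit (n : nat) (E : 'M[R]_n) :
  (forall x : 'cV[R]_n, E *m x = 0 -> x = 0) -> E \in unitmx.
Proof.
move=> h; rewrite -unitmx_tr -row_free_unit -kermx_eq0; apply/eqP.
apply/row_matrixP => i; rewrite row0.
have : row i (kermx E^T) *m E^T = 0 by rewrite -row_mul mulmx_ker row0.
move=> /(congr1 trmx); rewrite trmx_mul trmxK trmx0 => /h.
by move=> /(congr1 trmx); rewrite trmxK trmx0.
Qed.

Lemma face_const (n : nat) (P : 'cV[R]_n -> Prop) l x y :
  face P l x -> face P l y -> dot l x = dot l y.
Proof. by move=> [Px hx] [Py hy]; apply/le_anti; rewrite hx // hy. Qed.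

Lemma normal_dir (n : nat) (P : 'cV[R]_n.+1 -> Prop) (l l' : 'cV[R]_n.+1)
  (p : 'I_n.+1 -> 'cV[R]_n.+1) :
  aff_indep p -> (forall i, face P l (p i)) -> (forall i, face P l' (p i)) ->
  l != 0 -> l' = (dot l l' / dot l l) *: l.
Proof.
move=> ai hl hl' l0.
have ll0 : dot l l != 0 by rewrite dot_eq0.
pose e := fun i : 'I_n.+1 => p i - p 0 + (i == 0)%:R *: l.
pose E := \matrix_(j, i) (e i) j 0.
have Ei : forall x : 'cV_n.+1, E *m x = 0 -> x = 0.
  move=> x; rewrite colmx_mul.
  have -> : \sum_i x i 0 *: e i = \sum_i x i 0 *: (p i - p 0) + x 0 0 *: l.
    rewrite /e; under eq_bigr => i _ do rewrite scalerDr.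
    rewrite big_split /=; congr (_ + _).
    rewrite (bigD1 0) //= scale1r big1 ?addr0 // => i /negbTE ->.
    by rewrite scale0r scaler0.
  move=> hx.
  have x00 : x 0 0 = 0.
    have := congr1 (dot l) hx; rewrite dot0r dotDr dot_sumr big1 ?add0r.
      by rewrite dotZr => /eqP; rewrite mulf_eq0 (negbTE ll0) orbF => /eqP.
    move=> i _; rewrite dotZr dotBr (face_const (hl i) (hl 0)) subrr mulr0 //.
  move: hx; rewrite x00 scale0r addr0 => hx.
  pose c := fun i : 'I_n.+1 => x i 0 - (i == 0)%:R * \sum_j x j 0.
  have c0 : \sum_i c i = 0.
    rewrite /c sumrB [X in _ - X](bigD1 0) //= mul1r.
    set S := \sum_(j < n.+1) x j 0.
    have -> : \sum_(i < n.+1 | i != 0) (i == 0)%:R * S = 0.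
      by rewrite big1 // => i /negbTE ->; rewrite mul0r.
    by rewrite addr0 subrr.
  have cp : \sum_i c i *: p i = 0.
    rewrite -[RHS]hx /c; under eq_bigr => i _ do rewrite scalerBl.
    under [in RHS]eq_bigr => i _ do rewrite scalerBr.
    rewrite !sumrB; congr (_ - _).
    rewrite (bigD1 0) //= mul1r -scaler_suml.
    set S := \sum_(j < n.+1) x j 0.
    have -> : \sum_(i < n.+1 | i != 0) ((i == 0)%:R * S) *: p i = 0.
      by rewrite big1 // => i /negbTE ->; rewrite mul0r scale0r.
    by rewrite addr0.
  have := ai c c0 cp => hc.
  apply/matrixP => i k; rewrite (ord1 k) mxE.
  have := hc i; rewrite /c; case: eqP => [-> _ | _]; first exact: x00.
  by rewrite mul0r subr0.
have Eu : E^T \in unitmx by rewrite unitmx_tr; apply: inj_unit.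
have key : forall y, (forall i, dot (p i) y = dot (p 0) y) ->
    E^T *m y = dot l y *: delta_mx 0 0.
  move=> y hy; apply/matrixP => i k; rewrite (ord1 k) colmx_trmul /e.
  rewrite dotDl dotBl hy subrr add0r dotZl !mxE eqxx andbT.
  by case: eqP => _; rewrite ?mul1r ?mul0r ?mulr1 ?mulr0.
have h1 : E^T *m l' = dot l l' *: delta_mx 0 0.
  by apply: key => i; rewrite !(dotC _ l'); apply: face_const.
have h2 : E^T *m l = dot l l *: delta_mx 0 0.
  by apply: key => i; rewrite !(dotC _ l); apply: face_const.
have : E^T *m (dot l l *: l' - dot l l' *: l) = 0.
  rewrite mulmxBr -!scalemxAr h1 h2 !scalerA mulrC subrr //.
move=> /(congr1 (mulmx (invmx E^T))); rewrite mulmxA mulVmx // mul1mx mulmx0.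
move=> /eqP; rewrite subr_eq0 => /eqP e1.
by rewrite mulrC -scalerA -e1 scalerA mulVf // scale1r.
Qed.

End Unique1.
Section PrimInt.
Variable R : realType.

Lemma int_unit (a b : int) : a * b = 1 -> a = 1 \/ a = -1.
Proof.
move=> h.
have : (`|a| * `|b| = 1)%N by rewrite -abszM h.
move/eqP; rewrite muln_eq1 => /andP[/eqP ha _].
case: (intP a) ha => // k; rewrite ?abszN /= => -[->]; by [left | right].
Qed.

Lemma ratr_inj : injective (@ratr R).
Proof. exact: (fmorph_inj (@ratr R)). Qed.

Lemma trmx_col_dot (n : nat) (B : 'M[R]_n) (l : 'cV[R]_n) r :
  (B^T *m l) r 0 = dot l (col r B).
Proof. by rewrite mxE dotE; apply: eq_bigr => j _; rewrite !mxE mulrC. Qed.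

Lemma prim_int (n : nat) (B : 'M[R]_n) (l : 'cV[R]_n) (c : R) :
  B \in unitmx -> primitive B l -> inMdual B (c *: l) -> exists a : int, c = a%:~R.
Proof.
move=> Bu [hl l0 hm] hcl.
have /fin_all_exists [z hz] : forall r : 'I_n, exists k : int, dot l (col r B) = k%:~R.
  by move=> r; have [k ->] := (inMdualP B l).1 hl r; exists k.
have /fin_all_exists [w hw] : forall r : 'I_n, exists k : int, dot (c *: l) (col r B) = k%:~R.
  by move=> r; have [k ->] := (inMdualP B _).1 hcl r; exists k.
have hw' : forall r, (w r)%:~R = c * (z r)%:~R :> R by move=> r; rewrite -hw -hz dotZl.
have [r0 zr0] : exists r0, z r0 != 0.
  case: (boolP [exists r, z r != 0]) => [/existsP //|/existsPn h].
  have : B^T *m l = 0.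
    apply/matrixP => r k; rewrite (ord1 k) trmx_col_dot hz mxE.
    by have := h r; rewrite negbK => /eqP ->.
  move=> /(congr1 (mulmx (invmx B^T))); rewrite mulmxA mulVmx ?unitmx_tr //.
  by rewrite mul1mx mulmx0 => e; rewrite e eqxx in l0.
pose q : rat := (w r0)%:~R / (z r0)%:~R.
have zr0R : (z r0)%:~R != 0 :> R by rewrite intr_eq0.
have cq : c = ratr q.
  by rewrite /q fmorph_div !rmorph_int hw' mulfK.
have qz : forall r, q * (z r)%:~R = (w r)%:~R :> rat.
  move=> r; apply: ratr_inj; rewrite rmorphM /= !rmorph_int -cq hw' //.
pose d := denq q; pose a := numq q.
have hd : 0 < d by apply: denq_gt0.
have az : forall r, a * z r = w r * d.
  move=> r; apply: (@intr_inj rat); rewrite !rmorphM /= numqE -mulrA (mulrC _ (z r)%:~R).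
  by rewrite mulrA qz.
have dz : forall r, (d %| z r)%Z.
  move=> r; rewrite -(@Gauss_dvdzr d a); last by rewrite coprimezE coprime_sym coprime_num_den.
  by rewrite az dvdz_mull // dvdzz.
have d1 : d = 1.
  have dm : d = (`|d|%N)%:Z by rewrite gez0_abs // ltW.
  case: (ltnP 1 `|d|%N) => [m1|].
    exfalso; apply: (hm _ m1); apply/inMdualP => r.
    have [k ek] := dvdzP (dz r).
    rewrite dotZl hz ek rmorphM /= dm /= -[X in _ * (_ * X)]/((`|d|%N)%:R).
    rewrite mulrC -mulrA mulfV ?mulr1; first exact: isZ_int.
    by rewrite pnatr_eq0 -lt0n (ltn_trans _ m1).
  rewrite leq_eqVlt ltnS leqn0 absz_eq0 (gt_eqF hd) orbF => /eqP e.
  by rewrite dm e.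
exists a; rewrite cq.
have -> : q = a%:~R by rewrite /a numqE -/d d1 mulr1.
by rewrite ratr_int.
Qed.

End PrimInt.
Section Unique2.
Variable R : realType.

Lemma flat_contra (n : nat) (P : 'cV[R]_n -> Prop) (l : 'cV[R]_n) (h : R) :
  full_dim P -> l != 0 -> (forall y, P y -> dot l y = h) -> False.
Proof.
case=> q [Pq ai] l0 hy.
pose g := fun i : 'I_n => q (lift ord0 i) - q ord0.
pose G := \matrix_(j, i) (g i) j 0.
have Gi : forall x : 'cV_n, G *m x = 0 -> x = 0.
  move=> x; rewrite colmx_mul => hx.
  pose c := fun j : 'I_n.+1 => if unlift ord0 j is Some i then x i 0 else - \sum_i x i 0.
  have cl : forall i : 'I_n, c (lift ord0 i) = x i 0 by move=> i; rewrite /c liftK.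
  have cz : c ord0 = - \sum_i x i 0 by rewrite /c unlift_none.
  have c0 : \sum_j c j = 0.
    rewrite big_ord_recl cz [X in _ + X](eq_bigr (fun i => x i 0)) ?addNr // => i _; exact: cl.
  have cq : \sum_j c j *: q j = 0.
    rewrite big_ord_recl cz [X in _ + X](eq_bigr (fun i => x i 0 *: q (lift ord0 i))); last first.
      by move=> i _; congr (_ *: _); exact: cl.
    rewrite -[RHS]hx /g; under [in RHS]eq_bigr => i _ do rewrite scalerBr.
    by rewrite sumrB -scaler_suml scaleNr addrC.
  have := ai c c0 cq => hc.
  apply/matrixP => i k; rewrite (ord1 k) mxE.
  by have := hc (lift ord0 i); rewrite cl.
have Gu : G^T \in unitmx by rewrite unitmx_tr; apply: inj_unit.
have : G^T *m l = 0.
  apply/matrixP => i k; rewrite (ord1 k) colmx_trmul /g dotBl !(dotC _ l) !hy //.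
  by rewrite subrr mxE.
move=> /(congr1 (mulmx (invmx G^T))); rewrite mulmxA mulVmx // mul1mx mulmx0.
by move=> e; rewrite e eqxx in l0.
Qed.

Lemma normal_unique (n : nat) (P : 'cV[R]_n -> Prop) (B : 'M[R]_n) (l l' : 'cV[R]_n) :
  B \in unitmx -> full_dim P -> isFacetNormal B P l -> isFacetNormal B P l' ->
  (forall x, face P l x <-> face P l' x) -> l = l'.
Proof.
case: n P B l l' => [|n] P B l l' Bu fd [pl [p [hp ai]]] [pl' _] hf.
  by apply/matrixP => i; case: i.
have [hl l0 _] := pl; have [hl' l'0 _] := pl'.
have hp' : forall i, face P l' (p i) by move=> i; apply/hf.
have e := normal_dir ai hp hp' l0.
set c := dot l l' / dot l l in e.
have [a ea] : exists a : int, c = a%:~R by apply: (prim_int Bu pl); rewrite -e.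
have c0 : c != 0 by apply: contraNneq l'0 => c0; rewrite e c0 scale0r.
have [b eb] : exists b : int, c^-1 = b%:~R.
  by apply: (prim_int Bu pl'); rewrite e scalerA mulVf // scale1r.
have ab : a * b = 1.
  by apply: (@intr_inj R); rewrite rmorphM /= -ea -eb mulfV.
case: (int_unit ab) => ea1; first by rewrite e ea ea1 scale1r.
exfalso; apply: (flat_contra fd l0 (h := dot l (p 0))) => y Py.
have [_ h1] := hp 0; have [_ h2] := hp' 0.
apply/le_anti; rewrite h1 //=.
have := h2 y Py; rewrite e ea ea1 !dotZl.
by rewrite mulN1r ?mulNr ?mul1r lerN2.
Qed.

End Unique2.
Section Ideal.
Variable R : realType.
Variable n : nat.
Local Notation V := 'cV[R]_n.
Variables (Rt : seq V) (B : 'M[R]_n) (Lam : seq V).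
Variables (NK : nat) (FK : 'I_NK -> V) (N : nat) (ix : 'I_N -> 'I_NK * 'M[R]_n).
Local Notation IJ := (inIJ Rt B Lam FK ix).

Lemma IJ0 : IJ 0.
Proof. by exists 0%N, (fun _ => 0), (fun _ => 0); split=> [[]//|]; rewrite big_ord0. Qed.

Lemma IJ_J g : isJgen Rt B Lam FK ix g -> IJ g.
Proof.
move=> hg; exists 1%N, (fun _ => 1), (fun _ => g); split; first by move=> _; right.
by rewrite big_ord1 mul1r.
Qed.

Lemma IJD p q : IJ p -> IJ q -> IJ (p + q).
Proof.
case=> m1 [a1 [g1 [h1 ->]]] [m2 [a2 [g2 [h2 ->]]]].
pose a r := match split r with inl r1 => a1 r1 | inr r2 => a2 r2 end.
pose g r := match split r with inl r1 => g1 r1 | inr r2 => g2 r2 end.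
exists (m1 + m2)%N, a, g; split.
  by move=> r; rewrite /g; case: (split r).
rewrite big_split_ord; congr (_ + _); apply: eq_bigr => r _.
  by rewrite /a /g (unsplitK (inl r : 'I_m1 + 'I_m2)).
by rewrite /a /g (unsplitK (inr r : 'I_m1 + 'I_m2)).
Qed.

Lemma IJM c p : IJ p -> IJ (c * p).
Proof.
case=> m [a [g [h ->]]]; exists m, (fun r => c * a r), g; split=> //.
by rewrite mulr_sumr; apply: eq_bigr => r _; rewrite mulrA.
Qed.

Lemma IJN p : IJ p -> IJ (- p).
Proof. by move=> h; rewrite -mulN1r; apply: IJM. Qed.

Lemma IJB p q : IJ p -> IJ q -> IJ (p - q).
Proof. by move=> hp hq; apply: IJD => //; apply: IJN. Qed.

Lemma IJZ c p : IJ p -> IJ (c *: p).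
Proof. by move=> h; rewrite -mul_mpolyC; apply: IJM. Qed.

Lemma IJ_sum (I : Type) (r : seq I) (P : pred I) (F : I -> {mpoly rat[N]}) :
  (forall i, P i -> IJ (F i)) -> IJ (\sum_(i <- r | P i) F i).
Proof.
move=> h; elim/big_rec: _ => [|i x Pi hx]; first exact: IJ0.
by apply: IJD => //; apply: h.
Qed.

Definition cong (x y : {mpoly rat[N]}) := IJ (x - y).

Lemma congM x1 x2 y1 y2 : cong x1 y1 -> cong x2 y2 -> cong (x1 * x2) (y1 * y2).
Proof.
move=> h1 h2; rewrite /cong.
have -> : x1 * x2 - y1 * y2 = x1 * (x2 - y2) + (x1 - y1) * y2.
  by rewrite mulrBr mulrBl addrA subrK.
apply: IJD; first exact: IJM.
by rewrite mulrC; apply: IJM.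
Qed.

Lemma cong_prod (I : Type) (r : seq I) (P : pred I) (F1 F2 : I -> {mpoly rat[N]}) :
  (forall i, P i -> cong (F1 i) (F2 i)) ->
  cong (\prod_(i <- r | P i) F1 i) (\prod_(i <- r | P i) F2 i).
Proof.
move=> h; apply: (big_ind2 cong) => //; first by rewrite /cong subrr; apply: IJ0.
by move=> *; apply: congM.
Qed.

Lemma cong_exp x y k : cong x y -> cong (x ^+ k) (y ^+ k).
Proof.
move=> h; elim: k => [|k IH]; first by rewrite !expr0 /cong subrr; apply: IJ0.
by rewrite !exprS; apply: congM.
Qed.

End Ideal.
Section Reduce.
Variable R : realType.
Variable n : nat.
Local Notation V := 'cV[R]_n.
Variables (Rt : seq V) (B : 'M[R]_n) (Lam : seq V).
Variables (NK : nat) (FK : 'I_NK -> V) (N : nat) (ix : 'I_N -> 'I_NK * 'M[R]_n).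
Variable sigma : 'I_N -> 'I_N.
Local Notation cg := (cong Rt B Lam FK ix).

Lemma reduce_gen (k : nat) (lq : k.-tuple {mpoly rat[N]}) :
  (forall i : 'I_k, cg (act sigma (tnth lq i)) (tnth lq i)) ->
  forall p : {mpoly rat[k]}, cg (act sigma (comp_mpoly lq p)) (comp_mpoly lq p).
Proof.
move=> h; elim/mpolyind => [|c m p _ _ IH].
  by rewrite /act !comp_mpoly0 /cong subrr; apply: IJ0.
rewrite /act !comp_mpolyD !comp_mpolyZ /cong.
have -> : forall (a b a' b' : {mpoly rat[N]}), c *: a' + b' - (c *: a + b) = c *: (a' - a) + (b' - b).
  by move=> a b a' b'; rewrite scalerBr opprD addrACA.
apply: IJD; last exact: IH.
apply: IJZ; rewrite !comp_mpolyX rmorph_prod /=.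
apply: cong_prod => i _; rewrite rmorphXn /=; apply: cong_exp; exact: h.
Qed.

End Reduce.
Section RankSol.
Variable R : realType.
Variable n : nat.
Local Notation V := 'cV[R]_n.

Lemma rank_sol (Rt : seq V) (alpha : 'I_n -> V) (B : 'M[R]_n) (K : {set 'I_n}) (lH : 'I_n -> V) :
  B \in unitmx -> simple_system Rt alpha -> (forall k, k \in K -> isLH B alpha k (lH k)) ->
  forall m0 : 'I_#|K|, exists q : 'I_n -> rat,
    forall m, \sum_r ratr (q r) * dot (col r B) (lH (enum_val m)) = (m == m0)%:R.
Proof.
move=> Bu [_ indep _] hlH m0.
have hK : forall m : 'I_#|K|, isLH B alpha (enum_val m) (lH (enum_val m)).
  by move=> m; apply: hlH; apply: enum_valP.
have /fin_all_exists [f hf] : forall rm : 'I_n * 'I_#|K|,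
    exists a : rat, ratr a = dot (col rm.1 B) (lH (enum_val rm.2)).
  move=> [r m]; have [[hd _ _] _] := hK m.
  have [z ez] := (inMdualP B _).1 hd r.
  by exists z%:~R; rewrite rmorph_int /= dotC ez.
pose A : 'M[rat]_(n, #|K|) := \matrix_(r, m) f (r, m).
pose L : 'M[R]_(n, #|K|) := \matrix_(j, m) (lH (enum_val m)) j 0.
have AL : map_mx ratr A = B^T *m L.
  apply/matrixP => r m; rewrite !mxE hf dotE /=; apply: eq_bigr => j _.
  by rewrite !mxE.
have /fin_all_exists [cc hcc] : forall m : 'I_#|K|,
    exists c : R, c < 0 /\ lH (enum_val m) = c *: alpha (enum_val m).
  by move=> m; have [_ [c hc]] := hK m; exists c.
have Lfree : row_free L^T.
  rewrite -kermx_eq0; apply/eqP/row_matrixP => i; rewrite row0.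
  have : row i (kermx L^T) *m L^T = 0 by rewrite -row_mul mulmx_ker row0.
  move=> /(congr1 trmx); rewrite trmx_mul trmxK trmx0 => hv.
  set v := (row i (kermx L^T))^T in hv.
  suff hv0 : v = 0 by rewrite -[row i _]trmxK -/v hv0 trmx0.
  rewrite /L colmx_mul in hv.
  pose d := fun j : 'I_n => \sum_(m | enum_val m == j) v m 0 * cc m.
  have hd : \sum_j d j *: alpha j = 0.
    rewrite -[RHS]hv /d; under eq_bigr => j _ do rewrite scaler_suml.
    rewrite (exchange_big_dep xpredT) //=; apply: eq_bigr => m _.
    rewrite (big_pred1 (enum_val m)); last by move=> j; rewrite /= eq_sym.
    by rewrite (proj2 (hcc m)) scalerA.
  apply/matrixP => m k; rewrite (ord1 k) [RHS]mxE.
  have := indep d hd (enum_val m).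
  rewrite /d (big_pred1 m); last by move=> m'; rewrite /= (inj_eq enum_val_inj).
  move=> /eqP; rewrite mulf_eq0 => /orP[/eqP //|/eqP c0].
  by have := (proj1 (hcc m)); rewrite c0 ltxx.
have rA : \rank A = #|K|.
  rewrite -(mxrank_map (@ratr R)) AL -mxrank_tr trmx_mul mxrankMfree.
    by apply/eqP.
  by rewrite trmxK row_free_unit.
have : row_full A by rewrite -col_leq_rank rA.
case/row_fullP => Bq hBq.
exists (fun r => Bq m0 r) => m.
have := congr1 (fun M : 'M[rat]_#|K| => (@ratr R) (M m0 m)) hBq.
rewrite !mxE rmorph_sum /= rmorph_nat eq_sym => <-; apply: eq_bigr => r _.
by rewrite rmorphM /= mxE hf.
Qed.

End RankSol.
Section Setting.
Variable R : realType.
Variable n : nat.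
Local Notation V := 'cV[R]_n.
Variables (Rt : seq V) (alpha : 'I_n -> V) (B : 'M[R]_n) (Lam : seq V) (K : {set 'I_n}).
Variables (NK : nat) (FK : 'I_NK -> V) (N : nat) (ix : 'I_N -> 'I_NK * 'M[R]_n).
Local Notation P := (inP Rt Lam).
Hypothesis hset : setting Rt alpha B Lam.
Hypothesis hFK : FK_enum Rt alpha B Lam K FK.
Hypothesis hpair : pair_enum Rt alpha Lam K FK ix.

Lemma set_Rt0 : 0 \notin Rt.
Proof. by case: hset => -[]. Qed.
Lemma set_latok : lattice_ok Rt B.
Proof. by case: hset. Qed.
Lemma set_Bu : B \in unitmx.
Proof. by case: hset => _ _ []. Qed.
Lemma set_fd : full_dim P.
Proof. by case: hset => _ _ _ _ []. Qed.
Lemma set_alphaR i : alpha i \in Rt.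
Proof. by case: hset => _ [] . Qed.

Lemma WK_W (w : 'M[R]_n) : inWK alpha K w -> inW Rt w.
Proof.
case=> s [_ ->]; exists (map alpha s); split=> //.
by move=> x /mapP[i _ ->]; apply: set_alphaR.
Qed.

Lemma WK_mul (w1 w2 : 'M[R]_n) : inWK alpha K w1 -> inWK alpha K w2 -> inWK alpha K (w1 *m w2).
Proof.
case=> s1 [sub1 ->] [s2 [sub2 ->]]; exists (s1 ++ s2); split.
  by move=> x; rewrite mem_cat => /orP[]; [apply: sub1 | apply: sub2].
by rewrite map_cat prod_refl_cat.
Qed.

Lemma WK_tr (w : 'M[R]_n) : inWK alpha K w -> inWK alpha K w^T.
Proof.
case=> s [sub ->]; exists (rev s); split.
  by move=> x; rewrite mem_rev; apply: sub.
by rewrite prod_refl_tr map_rev.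
Qed.

Lemma img_W (w : 'M[R]_n) (G : V -> Prop) x : inW Rt w -> img w G x <-> G (w^T *m x).
Proof.
move=> hw; split; first by case=> y [Gy ->]; rewrite (W_TK set_Rt0 _ hw).
by move=> h; exists (w^T *m x); split=> //; rewrite (W_KT set_Rt0 _ hw).
Qed.

Lemma FK_facet j : isFacetNormal B P (FK j).
Proof. by case: hFK => _ h _; case: (h j). Qed.

Lemma normal_sF i l : isNormalOf B P l (sF Rt Lam FK ix i) -> l = (ix i).2 *m FK (ix i).1.
Proof.
case: hpair => hWK _ _.
move=> [fl hl]; have hw := WK_W (hWK i); set w := (ix i).2 in hw *.
have hwT := W_tr hw.
suff e : w^T *m l = FK (ix i).1 by rewrite -e (W_KT set_Rt0 _ hw).
apply: (normal_unique set_Bu set_fd); first exact: (facet_W set_Rt0 set_latok hwT).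
  exact: FK_facet.
move=> x; rewrite (face_W Lam set_Rt0 _ _ hwT) trmxK hl /sF -/w (img_W _ _ hw).
by rewrite (W_TK set_Rt0 _ hw).
Qed.

Lemma stabF_iff j (w : 'M[R]_n) : inWK alpha K w ->
  stabF alpha K P (FK j) w <-> (forall x, face P (FK j) (w^T *m x) <-> face P (FK j) x).
Proof.
move=> hwk; have hw := WK_W hwk; split.
  by case=> _ h x; have := h x; rewrite (img_W _ _ hw).
by move=> h; split=> // x; rewrite (img_W _ _ hw) h.
Qed.

Lemma stab_fix j (w : 'M[R]_n) : stabF alpha K P (FK j) w -> w *m FK j = FK j.
Proof.
move=> hs; have hwk := hs.1; have hw := WK_W hwk.
have /(stabF_iff _ hwk) h := hs.
apply: (normal_unique set_Bu set_fd).
- exact: (facet_W set_Rt0 set_latok hw (FK_facet j)).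
- exact: FK_facet.
by move=> x; rewrite (face_W Lam set_Rt0 _ _ hw) h.
Qed.

Variables (t : 'M[R]_n) (sigma : 'I_N -> 'I_N).
Hypothesis ht : inWK alpha K t.
Hypothesis hrep : represents_t Rt alpha Lam K FK ix t sigma.

Lemma s_WK i : inWK alpha K (ix i).2.
Proof. by case: hpair. Qed.

Lemma sigma_F i : (ix (sigma i)).1 = (ix i).1.
Proof. by case: (hrep i). Qed.

Lemma sigma_l i : (ix (sigma i)).2 *m FK (ix i).1 = t *m ((ix i).2 *m FK (ix i).1).
Proof.
have [_ hs] := hrep i; have := stab_fix hs.
have hts := WK_W (WK_mul ht (s_WK i)).
rewrite (W_inv set_Rt0 hts) => e.
by rewrite -{1}(W_KT set_Rt0 ((ix (sigma i)).2 *m FK (ix i).1) hts) [X in _ *m X]mulmxA e -mulmxA.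
Qed.

Lemma sigma_inj : injective sigma.
Proof.
move=> i i' e.
have [_ _ huniq] := hpair.
have eF : (ix i).1 = (ix i').1 by rewrite -sigma_F e sigma_F.
apply: huniq => //.
have [_ h1] := hrep i; have [_ h2] := hrep i'.
rewrite -eF in h2; rewrite e in h1.
have k1 := s_WK i; have k2 := s_WK i'; have k3 := s_WK (sigma i').
have ht1 := WK_mul ht k1; have ht2 := WK_mul ht k2.
rewrite /same_coset (W_inv set_Rt0 (WK_W k1)).
rewrite /same_coset (W_inv set_Rt0 (WK_W ht1)) in h1.
rewrite /same_coset (W_inv set_Rt0 (WK_W ht2)) in h2.
have hk1 := WK_mul (WK_tr ht1) k3; have hk2 := WK_mul (WK_tr ht2) k3.
set j := (ix i).1 in h1 h2 *.
set s1 := (ix i).2 in h1 h2 hk1 hk2 k1 ht1 *; set s2 := (ix i').2 in h1 h2 hk1 hk2 k2 ht2 *.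
set s3 := (ix (sigma i')).2 in h1 h2 hk1 hk2 k3 *.
have /(stabF_iff _ hk1) g1 := h1; have /(stabF_iff _ hk2) g2 := h2.
have hk := WK_mul (WK_tr k1) k2.
have E : (s1^T *m s2)^T = ((t *m s2)^T *m s3) *m ((t *m s1)^T *m s3)^T.
  rewrite !trmx_mul !trmxK -!mulmxA (mulmxA s3) (proj2 (W_orth set_Rt0 (WK_W k3))).
  rewrite mul1mx (mulmxA t^T) (proj1 (W_orth set_Rt0 (WK_W ht))) mul1mx //.
apply/(stabF_iff _ hk) => x; rewrite E.
rewrite -mulmxA; have a := g1 x; set y := (_ *m x) in a *.
have b := g2 (((t *m s2)^T *m s3) *m y); rewrite (W_TK set_Rt0 y (WK_W hk2)) in b.
by split=> H; [apply/a; apply/b | apply/b; apply/a].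
Qed.

Variables (lH : 'I_n -> V) (C : 'I_N -> 'I_#|K| -> rat).
Hypothesis hlH : forall k, k \in K -> isLH B alpha k (lH k).
Hypothesis hC : C_ok FK ix lH C.
Local Notation IJ := (inIJ Rt B Lam FK ix).
Local Notation cg := (cong Rt B Lam FK ix).

Lemma act_X i : act sigma ('X_i : {mpoly rat[N]}) = 'X_(sigma i).
Proof. by rewrite /act comp_mpolyXU -tnth_nth tnth_mktuple. Qed.

Lemma act_lin (a : 'I_N -> rat) :
  act sigma (\sum_i a i *: 'X_i) = \sum_i a i *: 'X_(sigma i).
Proof.
rewrite /act (big_morph _ (comp_mpolyD _) (comp_mpoly0 _)); apply: eq_bigr => i _.
by rewrite comp_mpolyZ comp_mpolyXU -tnth_nth tnth_mktuple.
Qed.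

Lemma sum_sigma (a : 'I_N -> rat) : (forall i, a (sigma i) = a i) ->
  \sum_i a i *: ('X_(sigma i) : {mpoly rat[N]}) = \sum_i a i *: 'X_i.
Proof.
move=> h; rewrite [RHS](reindex_inj sigma_inj); apply: eq_bigr => i _.
by rewrite h.
Qed.

Lemma genX j : cg (act sigma (\sum_(i | (ix i).1 == j) 'X_i)) (\sum_(i | (ix i).1 == j) 'X_i).
Proof.
rewrite /act (big_morph _ (comp_mpolyD _) (comp_mpoly0 _)) (eq_bigr (fun i => 'X_(sigma i))); last first.
  by move=> i _; rewrite comp_mpolyXU -tnth_nth tnth_mktuple.
rewrite /cong [X in _ - X](reindex_inj sigma_inj) /=.
under [X in _ - X]eq_bigl => i do rewrite sigma_F.
by rewrite subrr; apply: IJ0.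
Qed.

Lemma Jel u : inM B u -> exists cf : 'I_N -> rat,
  (forall i, ratr (cf i) = dot u ((ix i).2 *m FK (ix i).1)) /\ IJ (\sum_i cf i *: 'X_i).
Proof.
move=> uM.
have /fin_all_exists [cf hcf] : forall i, exists c : rat,
    ratr c = dot u ((ix i).2 *m FK (ix i).1).
  move=> i; have [[hd _ _] _] := FK_facet (ix i).1.
  have := W_Mdual set_latok (WK_W (s_WK i)) hd uM; case=> z ez.
  by exists z%:~R; rewrite rmorph_int dotC ez.
exists cf; split=> //; apply: IJ_J; exists u; split=> //; exists cf; split=> //.
by move=> i l /normal_sF ->.
Qed.

Lemma comb_IJ (q : 'I_n -> rat) (cf : 'I_n -> 'I_N -> rat) :
  (forall r, IJ (\sum_i cf r i *: 'X_i)) ->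
  IJ (\sum_i (\sum_r q r * cf r i) *: 'X_i).
Proof.
move=> h.
have -> : \sum_i (\sum_r q r * cf r i) *: ('X_i : {mpoly rat[N]}) =
          \sum_r q r *: \sum_i cf r i *: 'X_i.
  under eq_bigr do rewrite scaler_suml.
  rewrite exchange_big /=; apply: eq_bigr => r _.
  by rewrite scaler_sumr; apply: eq_bigr => i _; rewrite scalerA.
by apply: IJ_sum => r _; apply: IJZ.
Qed.

Lemma genY m0 : cg (act sigma (\sum_i C i m0 *: 'X_i)) (\sum_i C i m0 *: 'X_i).
Proof.
have hs : simple_system Rt alpha by case: hset.
have [q hq] := rank_sol set_Bu hs hlH m0.
have /fin_all_exists [cfA hA] : forall r : 'I_n, exists cf : 'I_N -> rat,
    (forall i, ratr (cf i) = dot (col r B) ((ix i).2 *m FK (ix i).1)) /\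
    IJ (\sum_i cf i *: 'X_i).
  by move=> r; apply: Jel; apply: inM_col.
have /fin_all_exists [cfB hB] : forall r : 'I_n, exists cf : 'I_N -> rat,
    (forall i, ratr (cf i) = dot (t *m col r B) ((ix i).2 *m FK (ix i).1)) /\
    IJ (\sum_i cf i *: 'X_i).
  by move=> r; apply: Jel; apply: (W_M set_latok (WK_W ht)); apply: inM_col.
pose c i := \sum_r q r * cfA r i.
pose b i := \sum_r q r * cfB r i.
have T1 : IJ (\sum_i c i *: 'X_i) by apply: comb_IJ => r; case: (hA r).
have T2 : IJ (\sum_i b i *: 'X_i) by apply: comb_IJ => r; case: (hB r).
have bc : forall i, b (sigma i) = c i.
  move=> i; apply: (fmorph_inj (@ratr R)); rewrite /b /c !rmorph_sum /=; apply: eq_bigr => r _.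
  rewrite !rmorphM /= (proj1 (hB r)) (proj1 (hA r)) sigma_F sigma_l.
  by rewrite (W_dot set_Rt0 _ _ (WK_W ht)).
pose E j := \sum_r ratr (q r) * dot (col r B) (FK j) : R.
have ce : forall i, ratr (c i) = E (ix i).1 + ratr (C i m0).
  move=> i; rewrite /c rmorph_sum /=.
  under eq_bigr => r _ do rewrite rmorphM /= (proj1 (hA r)).
  have := hC i; move/eqP; rewrite subr_eq => /eqP ->.
  under eq_bigr => r _ do rewrite dotDr mulrDr.
  rewrite big_split /= addrC; congr (_ + _).
  under eq_bigr => r _ do rewrite dot_sumr mulr_sumr.
  rewrite exchange_big /=.
  rewrite (eq_bigr (fun m => ratr (C i m) * (m == m0)%:R)); last first.
    move=> m _; rewrite -(hq m) mulr_sumr; apply: eq_bigr => r _.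
    by rewrite dotZr mulrCA.
  rewrite (bigD1 m0) //= eqxx mulr1 big1 ?addr0 // => m /negbTE ->.
  by rewrite mulr0.
pose e i := c i - C i m0.
have ee : forall i, e (sigma i) = e i.
  move=> i; apply: (fmorph_inj (@ratr R)); rewrite /e !rmorphB /= !ce !addrK sigma_F //.
rewrite /cong (act_lin (fun i => C i m0)).
have h1 : \sum_i b i *: ('X_i : {mpoly rat[N]}) = \sum_i c i *: 'X_(sigma i).
  by rewrite (reindex_inj sigma_inj); apply: eq_bigr => i _; rewrite bc.
have h2 : forall i, c i = C i m0 + e i by move=> i; rewrite /e addrC subrK.
have h3 := sum_sigma ee.
have -> : \sum_i C i m0 *: ('X_(sigma i) : {mpoly rat[N]}) - \sum_i C i m0 *: 'X_i =
          \sum_i b i *: 'X_i - \sum_i c i *: 'X_i.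
  rewrite h1 [X in _ = X - _](eq_bigr (fun i => C i m0 *: 'X_(sigma i) + e i *: 'X_(sigma i))); last first.
    by move=> i _; rewrite h2 scalerDl.
  rewrite [X in _ = _ - X](eq_bigr (fun i => C i m0 *: 'X_i + e i *: 'X_i)); last first.
    by move=> i _; rewrite h2 scalerDl.
  by rewrite !big_split /= h3 opprD addrACA subrr addr0.
exact: IJB.
Qed.

End Setting.
Unset Implicit Arguments. Set Strict Implicit.
Theorem lemma4p1 (R : realType) (n : nat) (Rt : seq 'cV[R]_n) (alpha : 'I_n -> 'cV[R]_n)
    (B : 'M[R]_n) (Lam : seq 'cV[R]_n) (K : {set 'I_n})
    (NK : nat) (FK : 'I_NK -> 'cV[R]_n) (N : nat) (ix : 'I_N -> 'I_NK * 'M[R]_n)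
    (lH : 'I_n -> 'cV[R]_n) (C : 'I_N -> 'I_#|K| -> rat) :
  setting Rt alpha B Lam ->
  FK_enum Rt alpha B Lam K FK ->
  pair_enum Rt alpha Lam K FK ix ->
  (forall k, k \in K -> isLH B alpha k (lH k)) ->
  C_ok FK ix lH C ->
  forall (p : {mpoly rat[NK + #|K|]}) (t : 'M[R]_n) (sigma : 'I_N -> 'I_N),
    inWK alpha K t -> represents_t Rt alpha Lam K FK ix t sigma ->
    inIJ Rt B Lam FK ix (act sigma (Phi ix C p) - Phi ix C p).
Proof.
move=> hset hFK hpair hlH hC p t sigma ht hrep.
apply: (reduce_gen (Rt := Rt) (B := B) (Lam := Lam) (FK := FK) (ix := ix)) => v.
rewrite tnth_mktuple /Phi_gen; case: (split v) => [j|m].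
  exact: (genX hset hpair ht hrep).
exact: (genY hset hFK hpair ht hrep hlH hC).
Qed.
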